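(* Let $k\ge2$, $\ell\ge1$, and let $Z'_k(\ell)$ be the sequence $\mathrm{rev}_{k,\ell}(0),\mathrm{rev}_{k,\ell}(1),\dots,\mathrm{rev}_{k,\ell}(k^\ell-1)$. (1) If $b_1,\dots,b_d$ is a palindromic sequence of integers in $\{0,\dots,k^\ell-1\}$ that is strictly decreasing, then $b_1,\dots,b_d$ is a subsequence of $Z'_k(\ell)$ (its terms appear in $Z'_k(\ell)$ in this order). (2) Conversely, if a subsequence of $Z'_k(\ell)$ is palindromic, then it is strictly decreasing.
   Context: For integers $k\ge2$, $\ell\ge1$ and $0\le x<k^\ell$, write $x$ in base $k$ as a string of exactly $\ell$ digits (padding with leading zeros); $\mathrm{rev}_{k,\ell}(x)$ is the integer whose $\ell$-digit base-$k$ string is the reversal of that of $x$. A sequence $b_1,\dots,b_d$ of integers in $\{0,\dots,k^\ell-1\}$ is palindromic (with respect to $k$ and $\ell$) if $\mathrm{rev}_{k,\ell}(b_i)=b_{d+1-i}$ for all $i\in\{1,\dots,d\}$. $Z'_k(\ell)$ is the stable configuration $Z_k(\ell)$ of labeled chip-firing (with $1$ subtracted from each entry), which equals the radix-$k$ digit-reversal permutation. *)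

(* Defs.v *)
From mathcomp Require Import all_boot.
Set Implicit Arguments. Unset Strict Implicit. Unset Printing Implicit Defensive.

Definition digit (k i x : nat) : nat := (x %/ k ^ i) %% k.

(* rev_{k,l}(x): the integer whose l-digit base-k string is the reversal of
   the l-digit base-k string of x (x < k^l). The digit at position i
   (from the right) is moved to position l-1-i. *)
Definition revkl (k l x : nat) : nat :=
  \sum_(i < l) digit k i x * k ^ (l.-1 - i).

Definition Zprime (k l : nat) : seq nat := [seq revkl k l x | x <- iota 0 (k ^ l)].

(* b_1..b_d is palindromic: rev_{k,l}(b_i) = b_{d+1-i} for all i in 1..d
   (written 0-indexed: for i < d, rev(b_i) = b_{d-1-i}). *)
Definition palindromic (k l : nat) (b : seq nat) : Prop :=
  forall i, i < size b -> revkl k l (nth 0 b i) = nth 0 b ((size b).-1 - i).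

Definition strictly_decreasing (b : seq nat) : bool := sorted (fun x y => y < x) b.

(* Main.v *)
Require Import Defs.
From mathcomp Require Import all_boot zify.

Lemma revS1 k l x : 0 < k ->
  revkl k l.+1 x = (x %% k) * k ^ l + revkl k l (x %/ k).
Proof.
move=> k0; rewrite /revkl big_ord_recl /=.
rewrite /digit expn0 divn1 subn0; congr (_ + _).
apply: eq_bigr => i _; rewrite /bump /= add1n.
rewrite expnS divnMA; congr (_ * k ^ _); lia.
Qed.

Lemma revS2 k l x : 0 < k ->
  revkl k l.+1 x = k * revkl k l (x %% k ^ l) + digit k l x.
Proof.
move=> k0; rewrite /revkl big_ord_recr /= subnn expn0 muln1; congr (_ + _).
rewrite big_distrr; apply: eq_bigr => i _ /=.
have hi := ltn_ord i.
have -> : digit k i x = digit k i (x %% k ^ l).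
  rewrite /digit divn_modl; last by apply: dvdn_exp2l; lia.
  rewrite -expnB; [|lia|lia].
  have -> : l - i = (l - i).-1.+1 by lia.
  by rewrite expnS [RHS]modn_dvdm // dvdn_mulr.
rewrite mulnCA -expnS; congr (_ * k ^ _); lia.
Qed.

Lemma rev_lt k l x : 0 < k -> revkl k l x < k ^ l.
Proof.
move=> k0; elim: l x => [|l IH] x; first by rewrite /revkl big_ord0.
rewrite revS1 // expnS.
have h1 := IH (x %/ k); have h2 : x %% k < k by rewrite ltn_mod.
nia.
Qed.

Lemma rev_inv k l x : 0 < k -> x < k ^ l -> revkl k l (revkl k l x) = x.
Proof.
move=> k0; elim: l x => [|l IH] x hx.
  by rewrite /revkl big_ord0; lia.
rewrite [revkl k l.+1 x]revS2 // revS1 //.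
have hd : digit k l x < k by rewrite /digit ltn_mod.
rewrite [k * _]mulnC modnMDl modn_small // divnMDl // divn_small // addn0.
rewrite IH ?ltn_mod ?expn_gt0 ?k0 //.
have kp : 0 < k ^ l by rewrite expn_gt0 k0.
rewrite /digit modn_small; last by rewrite ltn_divLR //; move: hx; rewrite expnS.
by rewrite {3}(divn_eq x (k ^ l)).
Qed.

Lemma pal_sorted k l b : palindromic k l b ->
  sorted (fun x y => revkl k l x < revkl k l y) b = strictly_decreasing b.
Proof.
move=> hp; apply/idP/idP.
- move/(sortedP 0) => H; apply/(sortedP 0) => j hj.
  have := H (size b - j.+2) ltac:(lia).
  rewrite (hp (size b - j.+2)) ?(hp (size b - j.+2).+1); [|lia|lia].
  have -> : (size b).-1 - (size b - j.+2) = j.+1 by lia.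
  by have -> : (size b).-1 - (size b - j.+2).+1 = j by lia.
- move/(sortedP 0) => H; apply/(sortedP 0) => i hi.
  rewrite (hp i) ?(hp i.+1); [|lia|lia].
  have -> : (size b).-1 - i = ((size b).-1 - i.+1).+1 by lia.
  apply: H; lia.
Qed.

Theorem lemma7p1 (k l : nat) (hk : 2 <= k) (hl : 1 <= l) :
  (forall b : seq nat,
      all (fun x => x < k ^ l) b -> palindromic k l b -> strictly_decreasing b ->
      subseq b (Zprime k l))
  /\
  (forall b : seq nat,
      subseq b (Zprime k l) -> palindromic k l b -> strictly_decreasing b).
Proof.
have k0 : 0 < k by lia.
set r := (fun x y => revkl k l x < revkl k l y).
have rtr : transitive r by move=> y x z; rewrite /r; apply: ltn_trans.
have rirr : irreflexive r by move=> x; rewrite /r ltnn.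
have sZ : sorted r (Zprime k l).
  apply/(sortedP 0) => i; rewrite /Zprime size_map size_iota => hi.
  rewrite /r !(nth_map 0) ?size_iota; try lia.
  by rewrite !nth_iota ?rev_inv //; lia.
split.
- move=> b /allP hall hp hd.
  have sb : sorted r b by rewrite /r pal_sorted.
  have -> : b = filter (mem b) (Zprime k l).
    apply: (irr_sorted_eq rtr rirr) => //; first exact: sorted_filter.
    move=> x; rewrite mem_filter /=; case hx: (x \in b) => //=.
    have xl := hall x hx.
    rewrite -(rev_inv _ _ _ k0 xl) /Zprime; symmetry; apply: map_f.
    by rewrite mem_iota add0n rev_lt.
  exact: filter_subseq.
- move=> b hs hp; rewrite -(pal_sorted _ _ _ hp).
  exact: (subseq_sorted rtr hs sZ).
Qed.
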